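(* Let $\mathbb{K}$ be a field, $m\ge 3$, $R=\mathbb{K}[T_1,\dots,T_m]$, $S=R[X_1,\dots,X_m,W]$, and let $a_1,\dots,a_m,b_1,\dots,b_m$ be integers with $0\le b_i<a_i$ for all $i$ and $b_i\ne0$ for at least two $i$. Let $\mathcal{H}_0\subset S$ be the ideal generated by $\Gamma_0=\{\mathcal{P}(X_i,X_j)\mid 1\le j<i\le m+1\}$. Then $\operatorname{depth}(S/\operatorname{in}(\mathcal{H}_0))\ge m+1$, where $\operatorname{in}$ is taken with respect to $\tau$.
   Context: Write $\mathbf{T}^{\mathbf{b}}=T_1^{b_1}\cdots T_m^{b_m}$ and $X_{m+1}:=W$. Let $\Psi:S\to R$ be the $R$-algebra map $X_i\mapsto T_i^{a_i}$ ($1\le i\le m$), $W\mapsto\mathbf{T}^{\mathbf{b}}$. For monomials $M,N$ in $X_1,\dots,X_m,W$, with $g=\gcd(\Psi(M),\Psi(N))$, set $\mathcal{P}(M,N)=\frac{\Psi(N)}{g}M-\frac{\Psi(M)}{g}N$. (Thus $\mathcal{H}_0=L_1S$, the ideal generated by the linear part of the defining ideal of the Rees algebra of $I=\langle T_1^{a_1},\dots,T_m^{a_m},\mathbf{T}^{\mathbf{b}}\rangle$.) The order $\tau$ is lex on $S$ with $W>X_m>\cdots>X_1>T_1>\cdots>T_m$. *)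

(* Defs.v *)
From HB Require Import structures.
From mathcomp Require Import all_boot all_order all_algebra.
From mathcomp Require Import mpoly.

Set Implicit Arguments.
Unset Strict Implicit.
Unset Printing Implicit Defensive.

Import Order.TTheory GRing.Theory.
Local Open Scope ring_scope.

Section Defs.

Variable A : comNzRingType.

Definition ideal_gen (G : A -> Prop) : A -> Prop :=
  fun f => exists s : seq (A * A),
      (forall p, p \in s -> G p.2) /\ f = \sum_(p <- s) p.1 * p.2.

Definition ideal_add (J : A -> Prop) (fs : seq A) : A -> Prop :=
  ideal_gen (fun g => J g \/ g \in fs).

Definition regular_seq (J : A -> Prop) (fs : seq A) : Prop :=
  (forall i, (i < size fs)%N -> forall g : A,
       ideal_add J (take i fs) (nth 0 fs i * g) -> ideal_add J (take i fs) g)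
  /\ ~ ideal_add J fs 1.

End Defs.

Section Poly.
Variable K : fieldType.
Variable n : nat.
Local Notation S := {mpoly K[n]}.

(* homogeneous maximal ideal (X_1,...,X_n): zero constant term *)
Definition max_homog (f : S) : bool := f@_0%MM == 0.

Definition depth_ge (J : S -> Prop) (d : nat) : Prop :=
  exists fs : seq S, size fs = d /\ (forall f, f \in fs -> max_homog f)
                     /\ regular_seq J fs.

(* lexicographic order on monomials, w.r.t. a priority list of variables
   (first element = biggest variable) *)
Fixpoint lex_le (pr : seq 'I_n) (u v : 'X_{1..n}) : bool :=
  match pr with
  | [::] => true
  | k :: r => if (u k < v k)%N then true
              else if u k == v k then lex_le r u v else false
  end.

Definition is_lead_mon (pr : seq 'I_n) (f : S) (u : 'X_{1..n}) : Prop :=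
  u \in msupp f /\ forall v, v \in msupp f -> lex_le pr v u.

Definition initial_ideal (pr : seq 'I_n) (I : S -> Prop) : S -> Prop :=
  ideal_gen (fun g => exists f u, I f /\ f != 0 /\ is_lead_mon pr f u /\ g = 'X_[u]).

End Poly.

(* Variables of S = K[T_1..T_m][X_1..X_m, W] are indexed by 'I_(m + m.+1):
   T_i (i = 1..m)  is  lshift m.+1 (i-1),
   X_k (k = 1..m)  is  rshift m (k-1),   W = X_{m+1} is rshift m ord_max. *)
Section Setting.
Variable K : fieldType.
Variable m : nat.
Local Notation nv := (m + m.+1)%N.
Local Notation S := {mpoly K[nv]}.

Definition varT (i : 'I_m) : 'I_nv := lshift m.+1 i.
Definition varX (k : 'I_m.+1) : 'I_nv := rshift m k.

(* order tau: lex with W > X_m > ... > X_1 > T_1 > ... > T_m *)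
Definition tau_pr : seq 'I_nv :=
  map varX (rev (enum 'I_m.+1)) ++ map varT (enum 'I_m).

Definition Tmon (e : 'I_m -> nat) : 'X_{1..nv} :=
  [multinom (match split t with inl i => e i | inr _ => 0%N end) | t < nv].

(* exponent vector (in the T's) of Psi(X_k): Psi(X_k) = T_k^{a_k} for k <= m,
   Psi(W) = T^b *)
Definition psiE (a b : 'I_m -> nat) (k : 'I_m.+1) (i : 'I_m) : nat :=
  if (k : nat) == m then b i else if (k : nat) == (i : nat) then a i else 0%N.

(* P(X_k, X_l) = Psi(X_l)/g * X_k - Psi(X_k)/g * X_l, g = gcd(Psi X_k, Psi X_l) *)
Definition Pgen (a b : 'I_m -> nat) (k l : 'I_m.+1) : S :=
  let g := fun i => minn (psiE a b k i) (psiE a b l i) in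
  'X_[Tmon (fun i => (psiE a b l i - g i)%N)] * 'X_(varX k)
  - 'X_[Tmon (fun i => (psiE a b k i - g i)%N)] * 'X_(varX l).

Definition Gamma0 (a b : 'I_m -> nat) : S -> Prop :=
  fun f => exists i j : 'I_m.+1, (j < i)%N /\ f = Pgen a b i j.

Definition H0 (a b : 'I_m -> nat) : S -> Prop := ideal_gen (Gamma0 a b).

End Setting.

(* Main.v *)
Require Import Defs.
From HB Require Import structures.
From mathcomp Require Import all_boot all_order all_algebra.
From mathcomp Require Import mpoly.
From mathcomp Require Import zify ring.
From Stdlib Require Import Relations ClassicalEpsilon.
Set Implicit Arguments. Unset Strict Implicit. Unset Printing Implicit Defensive.
Import Order.TTheory GRing.Theory.


Section Lex.
Variable n : nat.
Implicit Types (x y z u v w : 'X_{1..n}) (pr : seq 'I_n).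

Lemma lex_le_refl pr x : lex_le pr x x.
Proof. by elim: pr => //= k pr IH; rewrite ltnn eqxx. Qed.

Lemma lex_le_trans pr x y z : lex_le pr x y -> lex_le pr y z -> lex_le pr x z.
Proof.
elim: pr => //= k pr IH.
case: (ltngtP (x k) (y k)) => Hxy; case: (ltngtP (y k) (z k)) => Hyz //=.
- by rewrite (ltn_trans Hxy Hyz).
- by rewrite -Hyz Hxy.
- by rewrite Hxy Hyz.
- by rewrite Hxy Hyz ltnn eqxx; apply: IH.
Qed.

Lemma lex_le_add pr w x y : lex_le pr (w + x)%MM (w + y)%MM = lex_le pr x y.
Proof.
elim: pr => //= k pr IH; rewrite !mnmDE ltn_add2l eqn_add2l IH //.
Qed.

Lemma lex_le_antisym pr x y : lex_le pr x y -> lex_le pr y x ->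
  forall t, t \in pr -> x t = y t.
Proof.
elim: pr => //= k pr IH.
case: (ltngtP (x k) (y k)) => H //= H1 H2 t; rewrite inE.
case/orP => [/eqP -> //|]; exact: IH.
Qed.

Lemma lex_le_index pr x y k : k \in pr -> x k < y k ->
  (forall t, index t pr < index k pr -> x t = y t) -> lex_le pr x y.
Proof.
elim: pr => //= h pr IH; rewrite inE => Hk Hlt Heq.
case: (eqVneq k h) => [<-|Hne]; first by rewrite Hlt.
have Hne' : (h == k) = false by rewrite eq_sym; apply/negbTE.
have Hh : x h = y h by apply: Heq => /=; rewrite eqxx Hne'.
rewrite Hh ltnn eqxx; apply: IH => //.
  by move: Hk; rewrite (negbTE Hne).
move=> t Ht; apply: Heq => /=; rewrite Hne'.
by case: (h == t).
Qed.
End Lex.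

Section Rew.
Variable T : Type.
Variable R : T -> T -> Prop.

Inductive star : T -> T -> Prop :=
| st_refl x : star x x
| st_step x y z : R x y -> star y z -> star x z.

Inductive conv : T -> T -> Prop :=
| cv_refl x : conv x x
| cv_step x y : R x y -> conv x y
| cv_sym x y : conv x y -> conv y x
| cv_trans x y z : conv x y -> conv y z -> conv x z.

Lemma star_trans x y z : star x y -> star y z -> star x z.
Proof. by elim=> // x0 y0 z0 H _ IH Hz; apply: st_step H (IH Hz). Qed.

Lemma star1 x y : R x y -> star x y.
Proof. by move=> H; apply: st_step H (st_refl _). Qed.

Hypothesis D : forall x y1 y2, R x y1 -> R x y2 ->
  exists z, (y1 = z \/ R y1 z) /\ (y2 = z \/ R y2 z).

Lemma strip x y2 : star x y2 -> forall y1, R x y1 ->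
  exists z, star y1 z /\ (y2 = z \/ R y2 z).
Proof.
elim=> [x0 y1 H|x0 w y0 Hw Hs IH y1 H].
  by exists y1; split; [apply: st_refl | right].
have [z1 [H1 H2]] := D H Hw.
case: H2 => [Ew|Hwz].
  subst z1; exists y0; split; last by left.
  case: H1 => [->|H1]; first by [].
  exact: st_step H1 Hs.
have [z [Hz1 Hz2]] := IH _ Hwz.
exists z; split => //.
case: H1 => [->|H1] //; exact: st_step H1 Hz1.
Qed.

Lemma confl x y1 : star x y1 -> forall y2, star x y2 ->
  exists z, star y1 z /\ star y2 z.
Proof.
elim=> [x0 y2 H|x0 w y1' Hw _ IH y2 H].
  by exists y2; split => //; apply: st_refl.
have [z1 [Hz1 Hy2]] := strip H Hw.
have [z [H1 H2]] := IH _ Hz1.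
exists z; split => //.
case: Hy2 => [->|Hy2] //; exact: st_step Hy2 H2.
Qed.

Lemma church_rosser x y : conv x y -> exists z, star x z /\ star y z.
Proof.
elim=> [x0|x0 y0 H|x0 y0 _ [z [H1 H2]]|x0 y0 z0 _ [u [H1 H2]] _ [v [H3 H4]]].
- by exists x0; split; apply: st_refl.
- by exists y0; split; [apply: star1 | apply: st_refl].
- by exists z.
- have [w [H5 H6]] := confl H2 H3.
  by exists w; split; [apply: star_trans H1 H5 | apply: star_trans H4 H6].
Qed.

Lemma star_irred x y : (forall z, ~ R x z) -> star x y -> y = x.
Proof. by move=> Hx H; move: H Hx; case=> // x0 y0 z0 H _ Hx; case: (Hx _ H). Qed.
End Rew.


Section Setting.
Variable K : fieldType.
Variable m : nat.
Variables a b : 'I_m -> nat.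
Hypothesis hab : forall i, (b i < a i)%N.
Local Notation nv := (m + m.+1)%N.
Local Notation S := {mpoly K[nv]}.
Local Notation MN := ('X_{1..nv}).
Implicit Types (i j k l : 'I_m.+1).

Lemma eqTX (i : 'I_m) (k : 'I_m.+1) : (varT i == varX k) = false.
Proof. exact: eq_lrshift. Qed.
Lemma eqXT (i : 'I_m) (k : 'I_m.+1) : (varX k == varT i) = false.
Proof. by rewrite eq_sym eqTX. Qed.
Lemma eqTT (i j : 'I_m) : (varT i == varT j) = (i == j).
Proof. exact: (eq_shift.1.1.1). Qed.
Lemma eqXX (k l : 'I_m.+1) : (varX k == varX l) = (k == l).
Proof. exact: (eq_shift.1.1.2). Qed.

Lemma varP (P : 'I_nv -> Prop) : (forall i : 'I_m, P (varT i)) -> (forall k, P (varX k)) -> forall t, P t.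
Proof.
move=> HT HX t; case: (splitP t) => [i Ei|k Ek].
  by have -> : t = varT i by apply: val_inj.
by have -> : t = varX k by apply: val_inj.
Qed.

Lemma mnm_ext (x y : MN) : (forall i : 'I_m, x (varT i) = y (varT i)) ->
  (forall k, x (varX k) = y (varX k)) -> x = y.
Proof. by move=> HT HX; apply/mnmP; apply: varP. Qed.

Lemma lem_ext (x y : MN) : (forall i : 'I_m, x (varT i) <= y (varT i))%N ->
  (forall k, x (varX k) <= y (varX k))%N -> (x <= y)%MM.
Proof. by move=> HT HX; apply/mnm_lepP; apply: varP. Qed.

Lemma TmonT e (i : 'I_m) : Tmon e (varT i) = e i.
Proof. by rewrite mnmE /varT -/(unsplit (inl i)) unsplitK. Qed.
Lemma TmonX e (k : 'I_m.+1) : Tmon e (varX k) = 0%N.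
Proof. by rewrite mnmE /varX -/(unsplit (inr k)) unsplitK. Qed.
Lemma UXT (k : 'I_m.+1) (i : 'I_m) : (U_(varX k))%MM (varT i) = 0%N.
Proof. by rewrite mnm1E eqXT. Qed.
Lemma UXX (k l : 'I_m.+1) : (U_(varX k))%MM (varX l) = (k == l) :> nat.
Proof. by rewrite mnm1E eqXX. Qed.
Lemma UTT (k l : 'I_m) : (U_(varT k))%MM (varT l) = (k == l) :> nat.
Proof. by rewrite mnm1E eqTT. Qed.
Lemma UTX (k : 'I_m) (l : 'I_m.+1) : (U_(varT k))%MM (varX l) = 0%N.
Proof. by rewrite mnm1E eqTX. Qed.

Definition gmin (i j : 'I_m.+1) (t : 'I_m) := minn (psiE a b i t) (psiE a b j t).
Definition Lv (i j : 'I_m.+1) : MN :=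
  (Tmon (fun t => (psiE a b j t - gmin i j t)%N) + U_(varX i))%MM.
Definition Rv (i j : 'I_m.+1) : MN :=
  (Tmon (fun t => (psiE a b i t - gmin i j t)%N) + U_(varX j))%MM.

Lemma LvT i j (t : 'I_m) : Lv i j (varT t) = (psiE a b j t - gmin i j t)%N.
Proof. by rewrite mnmDE TmonT UXT addn0. Qed.
Lemma LvX i j (k : 'I_m.+1) : Lv i j (varX k) = (i == k :> nat) :> nat.
Proof. by rewrite mnmDE TmonX UXX. Qed.
Lemma RvT i j (t : 'I_m) : Rv i j (varT t) = (psiE a b i t - gmin i j t)%N.
Proof. by rewrite mnmDE TmonT UXT addn0. Qed.
Lemma RvX i j (k : 'I_m.+1) : Rv i j (varX k) = (j == k :> nat) :> nat.
Proof. by rewrite mnmDE TmonX UXX. Qed.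

Lemma Pgen_eq i j : Pgen K a b i j = ('X_[Lv i j] - 'X_[Rv i j])%R :> S.
Proof. by rewrite /Pgen /Lv /Rv !mpolyXD. Qed.

Lemma index_varX (k : 'I_m.+1) : index (varX k) (@tau_pr m) = (m - k)%N.
Proof.
have Hidx : index k (rev (enum 'I_m.+1)) = (m - k)%N.
  have Hs : (m - k < size (rev (enum 'I_m.+1)))%N.
    by rewrite size_rev size_enum_ord; lia.
  have Hu : uniq (rev (enum 'I_m.+1)) by rewrite rev_uniq enum_uniq.
  have := index_uniq ord0 Hs Hu; rewrite nth_rev; last by rewrite size_rev in Hs.
  rewrite size_enum_ord.
  have -> : (m.+1 - (m - k).+1)%N = k by have := ltn_ord k; lia.
  by rewrite nth_ord_enum.
rewrite /tau_pr index_cat mem_map; last exact: rshift_inj.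
by rewrite mem_rev mem_enum /= index_map; [exact: Hidx | exact: rshift_inj].
Qed.

Lemma index_varT (i : 'I_m) : (m < index (varT i) (@tau_pr m))%N.
Proof.
rewrite /tau_pr index_cat.
have -> : (varT i \in map (@varX m) (rev (enum 'I_m.+1))) = false.
  by apply/negbTE/mapP => -[k _ /eqP]; rewrite eqTX.
by rewrite size_map size_rev size_enum_ord; lia.
Qed.

Lemma mem_tau t : t \in @tau_pr m.
Proof.
apply: (@varP (fun t => t \in @tau_pr m)) => [i|k]; rewrite mem_cat.
  by rewrite orbC (mem_map (@lshift_inj _ _)) mem_enum.
by rewrite (mem_map (@rshift_inj _ _)) mem_rev mem_enum.
Qed.

Lemma lex_tau (x y : MN) (k : 'I_m.+1) : (x (varX k) < y (varX k))%N ->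
  (forall l : 'I_m.+1, (k < l)%N -> x (varX l) = y (varX l)) -> lex_le (@tau_pr m) x y.
Proof.
move=> Hk Hl; apply: (lex_le_index (mem_tau _) Hk).
apply: varP => [i|l].
  rewrite index_varX => H; have := index_varT i; have := leq_subr k m; lia.
rewrite !index_varX => H; apply: Hl.
by have := ltn_ord l; have := ltn_ord k; lia.
Qed.

Lemma lex_RL i j : (j < i)%N -> lex_le (@tau_pr m) (Rv i j) (Lv i j).
Proof.
move=> Hji; apply: (@lex_tau _ _ i) => [|l Hl]; rewrite RvX LvX.
  by rewrite eqxx; case: eqP => // E; rewrite E ltnn in Hji.
case: eqP => [E|]; first by rewrite -E in Hl; lia.
case: eqP => [E|] //; by rewrite -E in Hl; lia.
Qed.


Definition step (x y : MN) := exists i j : 'I_m.+1,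
  (j < i)%N /\ (Lv i j <= x)%MM /\ y = (x - Lv i j + Rv i j)%MM.

Lemma mnmDBE (x y z : MN) c : (x - y + z)%MM c = (x c - y c + z c)%N.
Proof. by rewrite mnmDE mnmBE. Qed.

Ltac crunch := rewrite /gmin /psiE; repeat (case: eqP => ?; try (exfalso; lia)); lia.

Lemma step_c (x : MN) i j j' : (j' < j)%N -> (j < i)%N ->
  (Lv i j <= x)%MM -> (Lv i j' <= x)%MM ->
  step (x - Lv i j + Rv i j)%MM (x - Lv i j' + Rv i j')%MM.
Proof.
move=> H1 H2 /mnm_lepP Hx /mnm_lepP Hx'; exists j, j'; split => //.
have := ltn_ord i; have := ltn_ord j; have := ltn_ord j' => Hj' Hj Hi.
split.
- apply: lem_ext => [t|k].
  + have := Hx (varT t); have := Hx' (varT t); have := hab t.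
    rewrite !mnmDBE !LvT !RvT; crunch.
  + have := Hx (varX k); have := Hx' (varX k).
    rewrite !mnmDBE !LvX !RvX; crunch.
- apply: mnm_ext => [t|k].
  + have := Hx (varT t); have := Hx' (varT t); have := hab t.
    rewrite !mnmDBE !LvT !RvT; crunch.
  + have := Hx (varX k); have := Hx' (varX k).
    rewrite !mnmDBE !LvX !RvX; crunch.
Qed.


Lemma step_d (x : MN) i i' j : (j < i')%N -> (i' < i)%N ->
  (Lv i j <= x)%MM -> (Lv i' j <= x)%MM ->
  step (x - Lv i' j + Rv i' j)%MM (x - Lv i j + Rv i j)%MM.
Proof.
move=> H1 H2 /mnm_lepP Hx /mnm_lepP Hx'; exists i, i'; split => //.
have := ltn_ord i; have := ltn_ord j; have := ltn_ord i' => Hi' Hj Hi.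
split.
- apply: lem_ext => [t|k].
  + have := Hx (varT t); have := Hx' (varT t); have := hab t.
    rewrite !mnmDBE !LvT !RvT; crunch.
  + have := Hx (varX k); have := Hx' (varX k).
    rewrite !mnmDBE !LvX !RvX; crunch.
- apply: mnm_ext => [t|k].
  + have := Hx (varT t); have := Hx' (varT t); have := hab t.
    rewrite !mnmDBE !LvT !RvT; crunch.
  + have := Hx (varX k); have := Hx' (varX k).
    rewrite !mnmDBE !LvX !RvX; crunch.
Qed.

Lemma LvT0 i j (t : 'I_m) : (j < i)%N -> (j : nat) <> t -> Lv i j (varT t) = 0%N.
Proof.
move=> Hji Hjt; have := ltn_ord i => Hi; rewrite LvT /gmin /psiE.
have -> : ((j : nat) == m) = false by apply/eqP; lia.
by have -> : ((j : nat) == t) = false by apply/eqP.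
Qed.

Lemma Lv_disj i j i' j' : (j < i)%N -> (j' < i')%N ->
  (i : nat) <> i' -> (j : nat) <> j' ->
  forall c, Lv i j c = 0%N \/ Lv i' j' c = 0%N.
Proof.
move=> H1 H2 H3 H4; apply: varP => [t|k].
  case: (eqVneq (j : nat) t) => [E|E]; last by left; apply: LvT0 => //; apply/eqP.
  by right; apply: LvT0 => //; rewrite -E => /esym.
rewrite !LvX; case: eqP => E; last by left.
by right; case: eqP => // E'; exfalso; apply: H3; rewrite E E'.
Qed.

Lemma step_b (x : MN) i j i' j' : (j < i)%N -> (j' < i')%N ->
  (i : nat) <> i' -> (j : nat) <> j' ->
  (Lv i j <= x)%MM -> (Lv i' j' <= x)%MM ->
  step (x - Lv i j + Rv i j)%MM (x - Lv i j + Rv i j - Lv i' j' + Rv i' j')%MM.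
Proof.
move=> H1 H2 H3 H4 /mnm_lepP Hx /mnm_lepP Hx'; exists i', j'; split => //.
split => //; apply/mnm_lepP => c; have := Lv_disj H1 H2 H3 H4 c.
have := Hx c; have := Hx' c; rewrite !mnmDBE; lia.
Qed.

Lemma comm_b (x : MN) i j i' j' : (j < i)%N -> (j' < i')%N ->
  (i : nat) <> i' -> (j : nat) <> j' ->
  (Lv i j <= x)%MM -> (Lv i' j' <= x)%MM ->
  (x - Lv i j + Rv i j - Lv i' j' + Rv i' j')%MM =
  (x - Lv i' j' + Rv i' j' - Lv i j + Rv i j)%MM.
Proof.
move=> H1 H2 H3 H4 /mnm_lepP Hx /mnm_lepP Hx'.
apply/mnmP => c; have := Lv_disj H1 H2 H3 H4 c.
have := Hx c; have := Hx' c; rewrite !mnmDBE; lia.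
Qed.

Lemma diamond (x y1 y2 : MN) : step x y1 -> step x y2 ->
  exists z, (y1 = z \/ step y1 z) /\ (y2 = z \/ step y2 z).
Proof.
case=> i [j [Hji [Hx ->]]] [i' [j' [Hji' [Hx' ->]]]].
case: (eqVneq (i : nat) i') => Ei.
  have Ei' : i = i' by apply: val_inj.
  subst i'.
  case: (ltngtP j j') => Hj.
  - exists (x - Lv i j + Rv i j)%MM; split; first by left.
    by right; apply: step_c.
  - exists (x - Lv i j' + Rv i j')%MM; split; last by left.
    by right; apply: step_c.
  - have Ej : j = j' by apply: val_inj.
    by subst j'; exists (x - Lv i j + Rv i j)%MM; split; left.
case: (eqVneq (j : nat) j') => Ej.
  have Ej' : j = j' by apply: val_inj.
  subst j'.
  case: (ltngtP i i') => Hi.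
  - exists (x - Lv i' j + Rv i' j)%MM; split; last by left.
    by right; apply: step_d.
  - exists (x - Lv i j + Rv i j)%MM; split; first by left.
    by right; apply: step_d.
  - by move/eqP: Ei; rewrite Hi.
exists (x - Lv i j + Rv i j - Lv i' j' + Rv i' j')%MM; split; right.
  by apply: step_b => //; apply/eqP.
rewrite comm_b //; try by apply/eqP.
by apply: step_b => //; apply/nesym/eqP.
Qed.

End Setting.


Section Groebner.
Variable K : fieldType.
Variable m : nat.
Variables a b : 'I_m -> nat.
Hypothesis hab : forall i, (b i < a i)%N.
Local Notation nv := (m + m.+1)%N.
Local Notation S := {mpoly K[nv]}.
Local Notation MN := ('X_{1..nv}).
Local Notation Lv := (Lv a b).
Local Notation Rv := (Rv a b).
Local Notation stp := (step a b).
Local Open Scope ring_scope.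

Lemma step_lex (x y : MN) : stp x y -> lex_le (tau_pr m) y x.
Proof.
case=> i [j [Hji [HL ->]]].
rewrite -{2}(submK HL).
by rewrite lex_le_add; apply: lex_RL.
Qed.

Lemma star_lex (x y : MN) : star stp x y -> lex_le (tau_pr m) y x.
Proof.
elim=> [x0|x0 y0 z0 H _ IH]; first exact: lex_le_refl.
exact: lex_le_trans IH (step_lex H).
Qed.

Lemma step_LR (w : MN) (i j : 'I_m.+1) : (j < i)%N ->
  stp (w + Lv i j)%MM (w + Rv i j)%MM.
Proof.
move=> Hji; exists i, j; split => //; split; first exact: lem_addl.
by rewrite addmK.
Qed.

Definition cls (u x : MN) : K :=
  if excluded_middle_informative (conv stp x u) then 1 else 0.

Definition Phi (u : MN) (f : S) : K := \sum_(x <- msupp f) f@_x * cls u x.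

Lemma sum_supp (F : MN -> K) (f : S) (s : seq MN) : uniq s ->
  {subset msupp f <= s} ->
  \sum_(x <- msupp f) f@_x * F x = \sum_(x <- s) f@_x * F x.
Proof.
move=> Us Hsub.
rewrite [RHS](bigID (mem (msupp f))) /= [X in _ + X]big1 ?addr0; last first.
  by move=> x /memN_msupp_eq0 ->; rewrite mul0r.
rewrite -[RHS]big_filter; apply: perm_big; apply: uniq_perm; rewrite ?filter_uniq ?msupp_uniq //.
move=> x; rewrite mem_filter; case Hx: (x \in msupp f) => //=.
by rewrite (Hsub _ Hx).
Qed.

Lemma PhiD u (f g : S) : Phi u (f + g) = Phi u f + Phi u g.
Proof.
rewrite /Phi (@sum_supp _ _ (undup (msupp f ++ msupp g))) ?undup_uniq //; last first.
  by move=> x /msuppD_le; rewrite mem_undup.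
rewrite (@sum_supp _ f (undup (msupp f ++ msupp g))) ?undup_uniq //; last first.
  by move=> x Hx; rewrite mem_undup mem_cat Hx.
rewrite (@sum_supp _ g (undup (msupp f ++ msupp g))) ?undup_uniq //; last first.
  by move=> x Hx; rewrite mem_undup mem_cat Hx orbT.
by rewrite -big_split /=; apply: eq_bigr => x _; rewrite mcoeffD mulrDl.
Qed.

Lemma PhiB u (f g : S) : Phi u (f - g) = Phi u f - Phi u g.
Proof.
rewrite /Phi (@sum_supp _ _ (undup (msupp f ++ msupp g))) ?undup_uniq //; last first.
  by move=> x /msuppB_le; rewrite mem_undup.
rewrite (@sum_supp _ f (undup (msupp f ++ msupp g))) ?undup_uniq //; last first.
  by move=> x Hx; rewrite mem_undup mem_cat Hx.
rewrite (@sum_supp _ g (undup (msupp f ++ msupp g))) ?undup_uniq //; last first.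
  by move=> x Hx; rewrite mem_undup mem_cat Hx orbT.
by rewrite -sumrB /=; apply: eq_bigr => x _; rewrite mcoeffB mulrBl.
Qed.

Lemma Phi0 u : Phi u 0 = 0.
Proof. by rewrite /Phi msupp0 big_nil. Qed.

Lemma PhiMX u (q : S) (L : MN) :
  Phi u (q * 'X_[L]) = \sum_(x <- msupp q) q@_x * cls u (L + x)%MM.
Proof.
rewrite /Phi (perm_big _ (msuppMX q L)) big_map.
by apply: eq_bigr => x _; rewrite mcoeffMX.
Qed.

Lemma cls_LR u (x : MN) (i j : 'I_m.+1) : (j < i)%N ->
  cls u (Lv i j + x)%MM = cls u (Rv i j + x)%MM.
Proof.
move=> Hji; have Hs : stp (x + Lv i j)%MM (x + Rv i j)%MM by apply: step_LR.
rewrite ![(_ + x)%MM]addmC /cls.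
case: excluded_middle_informative => H1; case: excluded_middle_informative => H2 //.
- by case: H2; apply: cv_trans (cv_sym (cv_step Hs)) H1.
- by case: H1; apply: cv_trans (cv_step Hs) H2.
Qed.

Lemma Phi_gen u (q : S) (i j : 'I_m.+1) : (j < i)%N ->
  Phi u (q * Pgen K a b i j) = 0.
Proof.
move=> Hji; rewrite Pgen_eq mulrBr PhiB !PhiMX.
by rewrite -sumrB big1 // => x _; rewrite cls_LR // subrr.
Qed.

Lemma Phi_H0 u (f : S) : H0 a b f -> Phi u f = 0.
Proof.
case=> s [Hs ->]; elim: s Hs => [|p s IH] Hs; first by rewrite big_nil Phi0.
rewrite big_cons PhiD IH; last by move=> q Hq; apply: Hs; rewrite inE Hq orbT.
have [i [j [Hji ->]]] := Hs p (mem_head _ _).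
by rewrite Phi_gen // add0r.
Qed.

Lemma lead_red (f : S) (u : MN) : H0 a b f ->
  is_lead_mon (tau_pr m) f u -> exists i j : 'I_m.+1, (j < i)%N /\ (Lv i j <= u)%MM.
Proof.
move=> Hf [Hu Hlead].
case: (classic (exists i j : 'I_m.+1, (j < i)%N /\ (Lv i j <= u)%MM)) => // Hn.
have Hirr : forall z, ~ stp u z.
  by move=> z [i [j [Hji [HL _]]]]; apply: Hn; exists i, j.
have HPhi := Phi_H0 u Hf.
move: HPhi; rewrite /Phi (bigD1_seq u) ?msupp_uniq //= big1_seq.
  rewrite addr0 /cls; case: excluded_middle_informative => [Hc|Hc]; last by case: Hc; apply: cv_refl.
  by rewrite mulr1 => /eqP; rewrite mcoeff_eq0 Hu.
move=> x /andP [Hxu Hx]; rewrite /cls.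
case: excluded_middle_informative => [Hc|Hc']; last by rewrite mulr0.
have [z [H1 H2]] := church_rosser (diamond hab) Hc.
have Ez := star_irred Hirr H2; subst z.
have Hl1 := star_lex H1.
have Hl2 := Hlead x Hx.
have Exu : x = u.
  by apply/mnmP => t; apply: (lex_le_antisym Hl2 Hl1 (mem_tau t)).
by rewrite Exu eqxx in Hxu.
Qed.

End Groebner.


Section Ideals.
Variable A : comNzRingType.
Local Open Scope ring_scope.
Implicit Types (G : A -> Prop) (f g q : A).

Lemma ig_gen G g : G g -> ideal_gen G g.
Proof.
by move=> Hg; exists [:: (1, g)]; split; [move=> p; rewrite inE => /eqP -> | rewrite big_seq1 mul1r].
Qed.

Lemma ig0 G : ideal_gen G 0.
Proof. by exists [::]; split => //; rewrite big_nil. Qed.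

Lemma igD G f g : ideal_gen G f -> ideal_gen G g -> ideal_gen G (f + g).
Proof.
case=> s1 [H1 ->] [s2 [H2 ->]]; exists (s1 ++ s2); split; last by rewrite big_cat.
by move=> p; rewrite mem_cat => /orP [/H1|/H2].
Qed.

Lemma igM G q f : ideal_gen G f -> ideal_gen G (q * f).
Proof.
case=> s [H ->]; exists [seq (q * p.1, p.2) | p <- s]; split.
  by move=> p /mapP [p' Hp' ->] /=; apply: H.
by rewrite big_map mulr_sumr; apply: eq_bigr => p _; rewrite mulrA.
Qed.

Lemma igN G f : ideal_gen G f -> ideal_gen G (- f).
Proof. by move=> H; rewrite -mulN1r; apply: igM. Qed.

Lemma igB G f g : ideal_gen G f -> ideal_gen G g -> ideal_gen G (f - g).
Proof. by move=> Hf Hg; apply: igD => //; apply: igN. Qed.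

Lemma ig_ind G (P : A -> Prop) : P 0 -> (forall f g, P f -> P g -> P (f + g)) ->
  (forall q g, G g -> P (q * g)) -> forall f, ideal_gen G f -> P f.
Proof.
move=> P0 PD PM f [s [H ->]]; elim: s H => [|p s IH] H; first by rewrite big_nil.
rewrite big_cons; apply: PD; first by apply: PM; apply: H; exact: mem_head.
by apply: IH => p' Hp'; apply: H; rewrite inE Hp' orbT.
Qed.

Lemma ig_trans G G' f : (forall g, G g -> ideal_gen G' g) -> ideal_gen G f -> ideal_gen G' f.
Proof.
move=> HG; apply: ig_ind; [exact: ig0 | move=> *; exact: igD | ].
by move=> q g Hg; apply: igM; apply: HG.
Qed.

Lemma ig_sum G (I : Type) (r : seq I) (F : I -> A) :
  (forall i, ideal_gen G (F i)) -> ideal_gen G (\sum_(i <- r) F i).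
Proof.
move=> H; elim: r => [|i r IH]; first by rewrite big_nil; apply: ig0.
by rewrite big_cons; apply: igD.
Qed.
End Ideals.

Section Subst.
Variable K : fieldType.
Variable n : nat.
Variable g : 'I_n -> 'I_n.
Local Notation S := {mpoly K[n]}.
Local Notation MN := ('X_{1..n}).
Local Open Scope ring_scope.

Definition lqg : n.-tuple S := [tuple 'X_(g v) | v < n].
Definition sig (f : S) : S := f \mPo lqg.
Definition rho (x : MN) : MN := (\sum_(v < n) U_(g v) *+ x v)%MM.

Lemma sigX (x : MN) : sig 'X_[x] = 'X_[rho x].
Proof.
rewrite /sig comp_mpolyX /rho -mprodXnE; apply: eq_bigr => v _.
by rewrite tnth_mktuple.
Qed.

Lemma sigM (p q : S) : sig (p * q) = sig p * sig q.
Proof. exact: rmorphM. Qed.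
Lemma sigD (p q : S) : sig (p + q) = sig p + sig q.
Proof. exact: rmorphD. Qed.
Lemma sigB (p q : S) : sig (p - q) = sig p - sig q.
Proof. exact: rmorphB. Qed.
Lemma sig0 : sig 0 = 0.
Proof. exact: rmorph0. Qed.
Lemma sig1 : sig 1 = 1.
Proof. exact: rmorph1. Qed.
Lemma sigZ c (p : S) : sig (c *: p) = c *: sig p.
Proof. exact: comp_mpolyZ. Qed.

Lemma rhoE (x : MN) c : rho x c = (\sum_(v < n) (g v == c) * x v)%N.
Proof. by rewrite /rho mnm_sumE; apply: eq_bigr => v _; rewrite mulmnE mnm1E. Qed.

Lemma rhoD (x y : MN) : rho (x + y)%MM = (rho x + rho y)%MM.
Proof.
apply/mnmP => c; rewrite mnmDE !rhoE -big_split /=.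
by apply: eq_bigr => v _; rewrite mnmDE mulnDr.
Qed.

Lemma rhoU w : rho U_(w)%MM = U_(g w)%MM.
Proof.
apply/mnmP => c; rewrite rhoE mnm1E (bigD1 w) //= mnm1E eqxx muln1 big1 ?addn0 //.
by move=> v Hv; rewrite mnm1E [w == v]eq_sym (negbTE Hv) muln0.
Qed.

Lemma sigXU v : sig 'X_v = 'X_(g v).
Proof. by rewrite sigX rhoU. Qed.

Lemma rho_le (x y : MN) : (x <= y)%MM -> (rho x <= rho y)%MM.
Proof. by move=> H; rewrite -(submK H) addmC rhoD; apply: lem_addr. Qed.

Definition supV (V : pred MN) (f : S) := forall x, x \in msupp f -> V x.

Variable V : pred MN.
Hypothesis Vup : forall x y : MN, V x -> (x <= y)%MM -> V y.

Lemma supV0 : supV V 0.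
Proof. by move=> x; rewrite msupp0. Qed.

Lemma supVD (p q : S) : supV V p -> supV V q -> supV V (p + q).
Proof. by move=> Hp Hq x /msuppD_le; rewrite mem_cat => /orP [/Hp|/Hq]. Qed.

Lemma supVM (p q : S) : supV V q -> supV V (p * q).
Proof.
move=> Hq x /msuppM_le /allpairsP [[x1 x2] [_ H2 ->]] /=.
by apply: (Vup (Hq _ H2)); apply: lem_addl.
Qed.

Lemma supV_ideal (G : S -> Prop) f : (forall h, G h -> supV V (sig h)) ->
  ideal_gen G f -> supV V (sig f).
Proof.
move=> HG; move: f; apply: (@ig_ind _ G (fun f => supV V (sig f))).
- by rewrite sig0; apply: supV0.
- by move=> p q Hp Hq; rewrite sigD; apply: supVD.
- by move=> q h Hh; rewrite sigM; apply: supVM; apply: HG.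
Qed.

Lemma sub_sig (G : S -> Prop) : (forall v, ideal_gen G ('X_v - 'X_(g v))) ->
  forall f, ideal_gen G (f - sig f).
Proof.
move=> HX.
have PD : forall p q : S, ideal_gen G (p - sig p) -> ideal_gen G (q - sig q) ->
    ideal_gen G (p + q - sig (p + q)).
  move=> p q Hp Hq; rewrite sigD.
  have -> : p + q - (sig p + sig q) = (p - sig p) + (q - sig q) by ring.
  exact: igD.
have PM : forall p q : S, ideal_gen G (p - sig p) -> ideal_gen G (q - sig q) ->
    ideal_gen G (p * q - sig (p * q)).
  move=> p q Hp Hq; rewrite sigM.
  have -> : p * q - sig p * sig q = q * (p - sig p) + sig p * (q - sig q) by ring.
  by apply: igD; apply: igM.
have P1 : ideal_gen G (1 - sig 1) by rewrite sig1 subrr; apply: ig0.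
have PXn : forall v k, ideal_gen G ('X_v ^+ k - sig ('X_v ^+ k)).
  move=> v; elim=> [|k IH]; first by rewrite expr0.
  by rewrite exprS; apply: PM => //; rewrite sigXU; apply: HX.
have PX : forall x : MN, ideal_gen G ('X_[x] - sig 'X_[x]).
  move=> x; rewrite mpolyXE_id.
  by apply: (big_ind (fun p => ideal_gen G (p - sig p))) => // *; apply: PM.
move=> f; rewrite (mpolyE f).
apply: (big_ind (fun p => ideal_gen G (p - sig p))) => //.
  by rewrite sig0 subr0; apply: ig0.
move=> x _; rewrite sigZ -scalerBr -mul_mpolyC; apply: igM; exact: PX.
Qed.

End Subst.

Section NZD.
Variable K : fieldType.
Variable n : nat.
Local Notation S := {mpoly K[n]}.
Local Notation MN := ('X_{1..n}).
Local Open Scope ring_scope.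

Lemma mcoeffXUM (y : 'I_n) (h : S) (mu : MN) :
  ('X_y * h)@_mu = if (U_(y) <= mu)%MM then h@_(mu - U_(y))%MM else 0.
Proof.
rewrite mulrC; case: ifP => H.
  by rewrite -{1}(submK H) addmC mcoeffMX.
apply/eqP; rewrite mcoeff_eq0; apply/negP => Hin.
move: Hin; rewrite (perm_mem (msuppMX h U_(y))) => /mapP [x _ Ex].
by move: H; rewrite Ex lem_addr.
Qed.

Variable V : pred MN.
Hypothesis Vup : forall x y : MN, V x -> (x <= y)%MM -> V y.

Lemma nzd_var (y : 'I_n) : (forall x : MN, V (x + U_(y))%MM -> V x) ->
  forall h : S, supV V ('X_y * h) -> supV V h.
Proof.
move=> Vy h H x Hx; apply: Vy; apply: H.
by rewrite mcoeff_msupp mcoeffXUM lem_addl addmK -mcoeff_msupp.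
Qed.

Ltac mnmc := first [apply/mnmP | apply/mnm_lepP]; let c := fresh "c" in move=> c;
  rewrite ?(mnmDE, mnmBE, mulmnE, mnm1E, mnm0E);
  repeat match goal with |- context [?u == c] => case: (u == c) end; rewrite /=; lia.

Lemma meet (y z : 'I_n) : (forall x : MN, V (x + U_(y))%MM -> V (x + U_(z))%MM -> V x) ->
  forall N p q (x : MN), (p + q <= N)%N -> V (x + U_(y) *+ p)%MM -> V (x + U_(z) *+ q)%MM -> V x.
Proof.
move=> Vloc; elim=> [|N IH] p q x Hpq.
  have -> : p = 0%N by lia.
  by rewrite mulm0n addm0.
case: p Hpq => [|p] Hpq; first by rewrite mulm0n addm0.
case: q Hpq => [|q] Hpq; first by rewrite mulm0n addm0.
move=> Hp Hq.
have H1 : V (x + U_(z))%MM.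
  apply: (IH p.+1 q (x + U_(z))%MM); first lia.
    by apply: (Vup Hp); mnmc.
  by apply: (Vup Hq); mnmc.
have H2 : V (x + U_(y) *+ p)%MM.
  by apply: Vloc; [apply: (Vup Hp) | apply: (Vup H1)]; mnmc.
by apply: (IH p q.+1) => //; lia.
Qed.

Ltac yzc y z c Hzy := case: (y =P c) => [<-|?]; rewrite ?Hzy /=;
  [lia | case: (z == c) => /=; lia].

Lemma nzd_bin (y z : 'I_n) : y != z ->
  (forall x : MN, V (x + U_(y))%MM -> V (x + U_(z))%MM -> V x) ->
  forall h : S, supV V (('X_y - 'X_z) * h) -> supV V h.
Proof.
move=> Hyz Vloc h H.
have Hzy : (z == y) = false by rewrite eq_sym; apply/negbTE.
have Hc : forall mu, ~~ V mu -> (('X_y - 'X_z) * h)@_mu = 0.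
  move=> mu Hmu; apply/eqP; rewrite mcoeff_eq0; apply/negP => /H.
  by rewrite (negbTE Hmu).
have HcE : forall mu, (('X_y - 'X_z) * h)@_mu =
    (if (U_(y) <= mu)%MM then h@_(mu - U_(y))%MM else 0) -
    (if (U_(z) <= mu)%MM then h@_(mu - U_(z))%MM else 0).
  by move=> mu; rewrite mulrBl mcoeffB !mcoeffXUM.
have crd : forall (c : 'I_n) (P : nat -> nat -> Prop),
    P 1%N 0%N -> P 0%N 1%N -> P 0%N 0%N -> P (y == c : nat) (z == c : nat).
  move=> c P H10 H01 H00; case: (eqVneq y c) => [<-|Hyc]; first by rewrite ?eqxx ?Hzy.
  by case: (z == c).
move=> x0' Hx0'; apply/idPn => Hnv.
pose P k := has (fun x : MN => ~~ V x && (x y == k)) (msupp h).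
have exP : exists k, P k.
  by exists (x0' y); apply/hasP; exists x0' => //; apply/andP; split.
have ubP : forall k, P k -> (k <= \max_(x <- msupp h) x y)%N.
  by move=> k /hasP [x Hx /andP [_ /eqP <-]]; apply: (leq_bigmax_seq x Hx).
case: (ex_maxnP exP ubP) => k0 Pk0 Hmax.
case/hasP: Pk0 => x0 Hx0 /andP [Hnv0 /eqP Hk0].
have Hh0 : h@_x0 != 0 by rewrite -mcoeff_msupp.
have V1 : V (x0 + U_(y))%MM.
  apply/idPn => Hn1; have := Hc _ Hn1; rewrite HcE lem_addl addmK.
  case: ifP => Hz.
    move/eqP; rewrite subr_eq0 => /eqP E.
    have Hx1 : (x0 + U_(y) - U_(z))%MM \in msupp h by rewrite mcoeff_msupp -E.
    have Hnv1 : ~~ V (x0 + U_(y) - U_(z))%MM.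
      by apply: contra Hn1 => Hv; apply: (Vup Hv); apply: lem_subr.
    have : P k0.+1.
      apply/hasP; exists (x0 + U_(y) - U_(z))%MM => //; rewrite Hnv1 /=.
      by rewrite mnmBE mnmDE !mnm1E eqxx Hzy -Hk0 addn1 subn0.
    by move/Hmax; rewrite ltnn.
  by rewrite subr0 => E; rewrite E eqxx in Hh0.
pose xt t := (x0 + U_(z) *+ t - U_(y) *+ t)%MM.
have NV : forall t, (t <= x0 y)%N -> ~~ V (xt t + U_(z))%MM.
  move=> t Ht; apply/negP => Hv.
  have : V (x0 - U_(y) *+ t)%MM.
    apply: (@meet y z Vloc (t.+1 + t.+1) t.+1 t.+1) => //.
      apply: (Vup V1); apply/mnm_lepP => c; rewrite /xt !(mnmDE, mnmBE, mulmnE, mnm1E).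
      yzc y z c Hzy.
    apply: (Vup Hv); apply/mnm_lepP => c; rewrite /xt !(mnmDE, mnmBE, mulmnE, mnm1E).
    yzc y z c Hzy.
  by move=> Hv'; move: Hnv0; rewrite (Vup Hv' (lem_subr _ _)).
have Hval : forall t, (t <= x0 y)%N -> h@_(xt t) = h@_x0.
  elim=> [|t IH] Ht; first by rewrite /xt !mulm0n addm0 subm0.
  rewrite -IH; last lia.
  have := Hc _ (NV t (ltnW Ht)); rewrite HcE lem_addl addmK.
  have -> : (U_(y) <= xt t + U_(z))%MM.
    apply/mnm_lepP => c; rewrite /xt !(mnmDE, mnmBE, mulmnE, mnm1E).
    yzc y z c Hzy.
  have -> : (xt t + U_(z) - U_(y))%MM = xt t.+1.
    apply/mnmP => c; rewrite /xt !(mnmDE, mnmBE, mulmnE, mnm1E).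
    yzc y z c Hzy.
  by move/eqP; rewrite subr_eq0 => /eqP.
have := Hc _ (NV _ (leqnn (x0 y))); rewrite HcE lem_addl addmK.
have -> : (U_(y) <= xt (x0 y) + U_(z))%MM = false.
  apply/negP => /mnm_lepP /(_ y); rewrite !(mnmDE, mnmBE, mulmnE, mnm1E) eqxx Hzy.
  lia.
by rewrite sub0r Hval // => /eqP; rewrite oppr_eq0 (negbTE Hh0).
Qed.
End NZD.


Section Reg.
Variable K : fieldType.
Variable m : nat.
Variables a b : 'I_m -> nat.
Hypothesis hab : forall i, (b i < a i)%N.
Local Notation nv := (m + m.+1)%N.
Local Notation S := {mpoly K[nv]}.
Local Notation MN := ('X_{1..nv}).
Local Notation Lv := (Lv a b).
Implicit Types (i j : 'I_m.+1).
Local Open Scope ring_scope.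

Definition gX (s : nat) (k : 'I_m.+1) : 'I_nv :=
  match k with
  | Ordinal 0 _ => varX k
  | Ordinal k'.+1 Hk => if (k'.+1 <= s)%N then varT (@Ordinal m k' Hk) else varX k
  end.

Definition gs (s : nat) (v : 'I_nv) : 'I_nv :=
  match split v with inl _ => v | inr k => gX s k end.

Lemma gsT s (t : 'I_m) : gs s (varT t) = varT t.
Proof. by rewrite /gs /varT -/(unsplit (inl t)) unsplitK. Qed.
Lemma gsX s (k : 'I_m.+1) : gs s (varX k) = gX s k.
Proof. by rewrite /gs /varX -/(unsplit (inr k)) unsplitK. Qed.

Lemma gX_T s (k : 'I_m.+1) (t : 'I_m) :
  (gX s k == varT t) = [&& (0 < k)%N, (k <= s)%N & (k == t.+1 :> nat)].
Proof.
case: k => [[|k'] Hk] /=; first by rewrite eqXT.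
case: ifP => Hs; last by rewrite eqXT.
by rewrite eqTT.
Qed.

Lemma gX_X s (k l : 'I_m.+1) :
  (gX s k == varX l) = ~~ ((0 < k)%N && (k <= s)%N) && (k == l :> nat).
Proof.
case: k => [[|k'] Hk] /=; first by rewrite eqXX.
case: ifP => Hs /=; first by rewrite eqTX.
by rewrite eqXX.
Qed.

Lemma rho_Tmon s e : rho (gs s) (Tmon e) = Tmon e.
Proof.
apply/mnmP => c; rewrite rhoE.
rewrite (eq_bigr (fun v => ((v == c) * Tmon e v)%N)); last first.
  by apply: varP => [t|k] _; rewrite ?gsT // !TmonX !muln0.
rewrite (bigD1 c) //= eqxx mul1n big1 ?addn0 //.
by move=> v /negbTE ->.
Qed.

Lemma rhoL s i j : rho (gs s) (Lv i j) =
  (Tmon (fun t => (psiE a b j t - gmin a b i j t)%N) + U_(gX s i))%MM.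
Proof. by rewrite /Lv rhoD rho_Tmon rhoU gsX. Qed.

Lemma RLT s i j (t : 'I_m) : rho (gs s) (Lv i j) (varT t) =
  (Lv i j (varT t) + [&& (0 < i)%N, (i <= s)%N & (i == t.+1 :> nat)])%N.
Proof. by rewrite rhoL mnmDE TmonT mnm1E gX_T LvT. Qed.

Lemma RLX s i j (k : 'I_m.+1) : rho (gs s) (Lv i j) (varX k) =
  (~~ ((0 < i)%N && (i <= s)%N) && (i == k :> nat)) :> nat.
Proof. by rewrite rhoL mnmDE TmonX mnm1E gX_X. Qed.

Definition Us (s : nat) : pred MN := fun x =>
  [exists i : 'I_m.+1, exists j : 'I_m.+1, (j < i)%N && (rho (gs s) (Lv i j) <= x)%MM].

Lemma UsP s x : reflect (exists i j : 'I_m.+1, (j < i)%N /\ (rho (gs s) (Lv i j) <= x)%MM) (Us s x).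
Proof.
apply: (iffP existsP) => [[i /existsP [j /andP [H1 H2]]]|[i [j [H1 H2]]]].
  by exists i, j.
by exists i; apply/existsP; exists j; rewrite H1.
Qed.

Lemma Us_up s (x y : MN) : Us s x -> (x <= y)%MM -> Us s y.
Proof.
move=> /UsP [i [j [H1 H2]]] Hxy; apply/UsP; exists i, j; split => //.
exact: lepm_trans H2 Hxy.
Qed.

Local Notation J := (initial_ideal (tau_pr m) (@H0 K m a b)).

Lemma Pgen_H0 i j : (j < i)%N -> H0 a b (Pgen K a b i j).
Proof. by move=> Hji; apply: ig_gen; exists i, j. Qed.

Lemma XL_in_J i j : (j < i)%N -> J 'X_[Lv i j].
Proof.
move=> Hji; apply: ig_gen.
have HLR : (Lv i j == Rv a b i j) = false.
  apply/negbTE/negP => /eqP E; have := LvX a b i j i; rewrite E RvX eqxx.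
  by case: eqP => // E'; rewrite E' ltnn in Hji.
have Hc : (Pgen K a b i j)@_(Lv i j) = 1.
  by rewrite Pgen_eq mcoeffB !mcoeffX eqxx eq_sym HLR subr0.
exists (Pgen K a b i j), (Lv i j); split; first exact: Pgen_H0.
split; first by apply/eqP => E; move: Hc; rewrite E mcoeff0 => /eqP; rewrite eq_sym oner_eq0.
split => //; split.
  by rewrite mcoeff_msupp Hc oner_neq0.
move=> v; rewrite Pgen_eq => /msuppB_le; rewrite !msuppX mem_cat !inE.
case/orP => /eqP ->; [exact: lex_le_refl | exact: lex_RL].
Qed.

Lemma J_sup s (f : S) : J f -> supV (Us s) (sig (gs s) f).
Proof.
apply: (supV_ideal (@Us_up s)) => g [h [u [Hh [Hnz [Hl ->]]]]].
rewrite sigX => x; rewrite msuppX inE => /eqP ->.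
have [i [j [Hji HL]]] := lead_red hab Hh Hl.
by apply/UsP; exists i, j; split => //; apply: rho_le.
Qed.

Definition ell (t : 'I_m) : S := 'X_(varT t) - 'X_(varX (lift ord0 t)).
Definition fs : seq S := [seq ell t | t <- enum 'I_m] ++ [:: 'X_(varX ord0)].

Lemma take_fs s : (s <= m)%N -> take s fs = [seq ell t | t <- take s (enum 'I_m)].
Proof.
move=> Hs; rewrite /fs take_cat size_map size_enum_ord map_take.
case: ltnP => H //; have -> : s = m by lia.
by rewrite subnn take0 cats0 take_oversize // size_map size_enum_ord.
Qed.

Lemma mem_take_fs s g : (s <= m)%N -> g \in take s fs ->
  exists t : 'I_m, (t < s)%N /\ g = ell t.
Proof.
move=> Hs; rewrite take_fs // => /mapP [t Ht ->]; exists t; split => //.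
by have := index_ltn Ht; rewrite index_enum_ord.
Qed.

Lemma ell_in_take s (t : 'I_m) : (s <= m)%N -> (t < s)%N -> ell t \in take s fs.
Proof.
move=> Hs Ht; rewrite take_fs //; apply: map_f.
by rewrite in_take_leq ?size_enum_ord // index_enum_ord.
Qed.

Lemma gX_lift s (t : 'I_m) :
  gX s (lift ord0 t) = if (t < s)%N then varT t else varX (lift ord0 t).
Proof.
case: ifP => H; apply/eqP; rewrite ?gX_T ?gX_X /= /bump leq0n add1n ?eqxx ?andbT /=; by rewrite ?H.
Qed.

Lemma sig_ell s (t : 'I_m) : sig (gs s) (ell t) = if (t < s)%N then 0 else ell t.
Proof. by rewrite /ell sigB !sigXU gsT gsX gX_lift; case: ifP; rewrite ?subrr. Qed.

Lemma gX_cases s (k : 'I_m.+1) : gX s k = varX k \/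
  exists t : 'I_m, (t < s)%N /\ k = lift ord0 t /\ gX s k = varT t.
Proof.
case: k => [[|k'] Hk] /=; first by left.
case: ifP => H; last by left.
right; exists (@Ordinal m k' Hk); split => //; split => //.
by apply: val_inj; rewrite /= /bump leq0n add1n.
Qed.

Lemma ig_sum_seq (G : S -> Prop) (I : eqType) (r : seq I) (F : I -> S) :
  (forall x, x \in r -> ideal_gen G (F x)) -> ideal_gen G (\sum_(i <- r) F i).
Proof.
elim: r => [|x0 r IH] H; first by rewrite big_nil; apply: ig0.
rewrite big_cons; apply: igD; first by apply: H; exact: mem_head.
by apply: IH => x Hx; apply: H; rewrite inE Hx orbT.
Qed.

Lemma memF s (f : S) : (s <= m)%N -> ideal_add J (take s fs) f -> supV (Us s) (sig (gs s) f).
Proof.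
move=> Hs; apply: (supV_ideal (@Us_up s)) => g [Hg|Hg]; first exact: J_sup.
have [t [Ht ->]] := mem_take_fs Hs Hg.
by rewrite sig_ell Ht => x; rewrite msupp0.
Qed.

Lemma sub_sig_s s (p : S) : (s <= m)%N -> ideal_add J (take s fs) (p - sig (gs s) p).
Proof.
move=> Hs; apply: (@ig_trans _ (fun g => g \in take s fs)).
  by move=> g Hg; apply: ig_gen; right.
apply: sub_sig; apply: varP => [t|k]; first by rewrite gsT subrr; apply: ig0.
rewrite gsX; case: (gX_cases s k) => [->|[t [Ht [Ek ->]]]].
  by rewrite subrr; apply: ig0.
have -> : 'X_(varX k) - 'X_(varT t) = - ell t :> S by rewrite /ell Ek opprB.
by apply: igN; apply: ig_gen; apply: ell_in_take.
Qed.

Lemma memB s (f : S) : (s <= m)%N -> supV (Us s) (sig (gs s) f) -> ideal_add J (take s fs) f.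
Proof.
move=> Hs Hf.
have HXL : forall i j, (j < i)%N -> ideal_add J (take s fs) (sig (gs s) 'X_[Lv i j]).
  move=> i j Hji.
  have -> : sig (gs s) 'X_[Lv i j] = 'X_[Lv i j] - ('X_[Lv i j] - sig (gs s) 'X_[Lv i j]) :> S by ring.
  apply: igB; last exact: sub_sig_s.
  by apply: ig_gen; left; apply: XL_in_J.
have -> : f = (f - sig (gs s) f) + sig (gs s) f by ring.
apply: igD; first exact: sub_sig_s.
rewrite (mpolyE (sig (gs s) f)); apply: ig_sum_seq => mu Hmu.
have [i [j [Hji HL]]] := UsP s mu (Hf _ Hmu).
rewrite -(submK HL) mpolyXD -sigX -mul_mpolyC mulrA.
by apply: igM; apply: HXL.
Qed.

Lemma br0 i (t : nat) : [&& (0 < i)%N, (i <= t)%N & (i == t.+1 :> nat)] = false.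
Proof. by apply/and3P => [[_ H3 /eqP H4]]; lia. Qed.

Lemma liftv (t : 'I_m) : (lift ord0 t : nat) = t.+1.
Proof. by rewrite /= /bump leq0n add1n. Qed.

Lemma Vloc_s (t : 'I_m) (x : MN) : Us t (x + U_(varT t))%MM ->
  Us t (x + U_(varX (lift ord0 t)))%MM -> Us t x.
Proof.
move=> /UsP [i1 [j1 [H1 /mnm_lepP L1]]] /UsP [i2 [j2 [H2 /mnm_lepP L2]]].
case A: (rho (gs t) (Lv i1 j1) (varT t) <= x (varT t))%N.
  apply/UsP; exists i1, j1; split => //; apply/mnm_lepP => c.
  have := L1 c; rewrite mnmDE mnm1E; case: eqP => [<-|_] //.
  by rewrite addn0.
case B: (rho (gs t) (Lv i2 j2) (varX (lift ord0 t)) <= x (varX (lift ord0 t)))%N.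
  apply/UsP; exists i2, j2; split => //; apply/mnm_lepP => c.
  have := L2 c; rewrite mnmDE mnm1E; case: eqP => [<-|_] //.
  by rewrite addn0.
have Ej1 : (j1 : nat) = t.
  case: (eqVneq (j1 : nat) t) => // Hne.
  by move: A; rewrite RLT br0 addn0 LvT0 //; apply/eqP.
have Ei2 : (i2 : nat) = t.+1.
  case: (eqVneq (i2 : nat) t.+1) => // Hne.
  by move: B; rewrite RLX liftv (negbTE Hne) andbF.
have Hi1 : (t < i1)%N by rewrite -Ej1.
apply/UsP; exists i1, j2; split; first by lia.
apply/mnm_lepP; apply: varP => [c|k].
  have Hb1 : [&& (0 < i1)%N, (i1 <= t)%N & (i1 == c.+1 :> nat)] = false.
    by apply/and3P => [[_ H3 _]]; lia.
  rewrite RLT Hb1 addn0.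
  case: (eqVneq (j2 : nat) c) => Hc; last by rewrite LvT0 //; [lia | apply/eqP].
  have Hb2 : [&& (0 < i2)%N, (i2 <= t)%N & (i2 == c.+1 :> nat)] = false.
    by apply/and3P => [[_ H3 _]]; lia.
  have := L2 (varT c); rewrite mnmDE mnm1E eqXT addn0 RLT Hb2 addn0 !LvT.
  have := ltn_ord i1; have := ltn_ord i2; have := ltn_ord j2; have := hab c.
  move: Hc Ei2 Hi1 H2; rewrite /gmin /psiE.
  by repeat (case: eqP => ?; try (exfalso; lia)); lia.
rewrite RLX; case: (eqVneq (i1 : nat) k) => Hk; last by rewrite ?andbF.
by move: (L1 (varX k)); rewrite mnmDE mnm1E eqTX addn0 RLX Hk eqxx.
Qed.

Lemma Vlast (x : MN) : Us m (x + U_(varX ord0))%MM -> Us m x.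
Proof.
move=> /UsP [i [j [H /mnm_lepP L]]]; apply/UsP; exists i, j; split => //.
apply/mnm_lepP => c; have := L c; rewrite mnmDE mnm1E; case: eqP => [<-|_]; last by rewrite addn0.
rewrite RLX; case E: (i == ord0 :> nat); last by rewrite andbF.
by move/eqP: E => E; rewrite E in H.
Qed.

Lemma nzd_stage (t : 'I_m) (g : S) :
  ideal_add J (take t fs) (ell t * g) -> ideal_add J (take t fs) g.
Proof.
move=> H; have Ht : (t <= m)%N by apply: ltnW.
apply: (memB Ht); have := memF Ht H; rewrite sigM sig_ell ltnn /ell => H'.
have Hyz : varT t != varX (lift ord0 t) by rewrite eqTX.
exact: (nzd_bin (@Us_up t) Hyz (@Vloc_s t) H').
Qed.

Lemma nzd_last (g : S) :
  ideal_add J (take m fs) ('X_(varX ord0) * g) -> ideal_add J (take m fs) g.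
Proof.
move=> H; apply: (memB (leqnn m)); have := memF (leqnn m) H.
rewrite sigM sigXU gsX /= => H'.
exact: (nzd_var Vlast H').
Qed.

Lemma final : ~ ideal_add J fs 1.
Proof.
move=> H.
pose V' : pred MN := fun x => Us m x || (0 < x (varX ord0))%N.
have V'up : forall x y : MN, V' x -> (x <= y)%MM -> V' y.
  move=> x y /orP [Hx|Hx] Hxy; apply/orP; first by left; apply: Us_up Hx Hxy.
  by right; move/mnm_lepP: Hxy => /(_ (varX ord0)); lia.
have : supV V' (sig (gs m) (1 : S)).
  apply: (supV_ideal V'up _ H) => g [Hg|Hg].
    by move=> x Hx; apply/orP; left; apply: (J_sup Hg).
  move: Hg; rewrite mem_cat => /orP [/mapP [t _ ->]|].
    by rewrite sig_ell ltn_ord => x; rewrite msupp0.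
  rewrite inE => /eqP ->; rewrite sigXU gsX /= => x; rewrite msuppX inE => /eqP ->.
  by apply/orP; right; rewrite mnm1E eqxx.
rewrite sig1 => /(_ 0%MM); rewrite msupp1 inE eqxx => /(_ isT) /orP [|]; last by rewrite mnm0E.
move=> /UsP [i [j [_ /mnm_lepP /(_ (gX m i))]]].
by rewrite rhoL mnmDE mnm1E eqxx mnm0E addn1.
Qed.
End Reg.


Lemma U_neq0 n (v : 'I_n) : (U_(v) == 0 :> 'X_{1..n})%MM = false.
Proof. by apply/negbTE/eqP => /mnmP /(_ v); rewrite mnm1E eqxx mnm0E. Qed.

Theorem proposition3p4 (K : fieldType) (m : nat) (a b : 'I_m -> nat) :
  (3 <= m)%N ->
  (forall i, (b i < a i)%N) ->
  (exists i j : 'I_m, i != j /\ b i != 0%N /\ b j != 0%N) ->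
  depth_ge (@initial_ideal K _ (@tau_pr m) (@H0 K m a b)) m.+1.
Proof.
move=> Hm hab _.
exists (@fs K m); split; first by rewrite size_cat size_map size_enum_ord addn1.
split.
  move=> f; rewrite mem_cat => /orP [/mapP [t _ ->]|]; rewrite /max_homog.
    by rewrite /ell mcoeffB !mcoeffX !U_neq0 subr0.
  by rewrite inE => /eqP ->; rewrite mcoeffX U_neq0.
split; last exact: final.
move=> i; rewrite size_cat size_map size_enum_ord addn1 ltnS => Hi g.
case: (ltngtP i m) => Hi'.
- pose t := Ordinal Hi'.
  have -> : nth 0%R (@fs K m) i = ell K t.
    rewrite /fs nth_cat size_map size_enum_ord Hi' (nth_map t) ?size_enum_ord //.
    by congr ell; apply: val_inj; rewrite /= nth_enum_ord.
  move=> HH; apply: (@nzd_stage K m a b hab t g); exact: HH.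
- by move: Hi Hi'; lia.
- subst i; have -> : nth 0%R (@fs K m) m = 'X_(varX ord0).
    by rewrite /fs nth_cat size_map size_enum_ord ltnn subnn.
  exact: (nzd_last hab).
Qed.
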